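(* Let $Z$ be the incidence matrix of the finite poset $\Phi_6((12)(3456))$ (with the pointwise order). Then $\phi_9\big((12)(345)(6789)\big)$ equals the sum of all entries of $Z^3$ (equivalently, the number of chains $a_1\le a_2\le a_3\le a_4$ in $\Phi_6((12)(3456))$), and its value is $22062570$.
   Context: $B=\{0,1\}$ with $0\le1$; $B^n$ is ordered componentwise; $D_n$ is the set of monotone functions $B^n\to B$, ordered pointwise. $S_n$ acts on $D_n$ by $(\pi f)(x_1,\dots,x_n)=f(x_{\pi(1)},\dots,x_{\pi(n)})$. For $\pi\in S_n$, $\Phi_n(\pi)=\{f\in D_n:\pi f=f\}$ and $\phi_n(\pi)=|\Phi_n(\pi)|$. Note $\phi_n(\pi)$ depends only on the cycle type of $\pi$. The incidence matrix of a finite poset $(X,\le)$ with elements $x_1,\dots,x_m$ is the $m\times m$ matrix $M$ with $M_{i,j}=1$ if $x_i\le x_j$ and $0$ otherwise. *)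

(* Defs.v *)
From mathcomp Require Import all_boot all_order all_algebra all_fingroup.
Set Implicit Arguments. Unset Strict Implicit. Unset Printing Implicit Defensive.
Import GRing.Theory.
Local Open Scope ring_scope.

(* B^n as {ffun 'I_n -> bool}, componentwise order; on B = bool, 0 <= 1 is a ==> b. *)
Definition vec (n : nat) := {ffun 'I_n -> bool}.
Definition vle n (x y : vec n) : bool := [forall i, x i ==> y i].

Definition bfun (n : nat) := {ffun vec n -> bool}.
Definition fle n (f g : bfun n) : bool := [forall x, f x ==> g x].

Definition monotone n (f : bfun n) : bool :=
  [forall x, forall y, vle x y ==> (f x ==> f y)].

Definition D (n : nat) : {set bfun n} := [set f | monotone f].

Definition act n (p : 'S_n) (f : bfun n) : bfun n :=
  [ffun x : vec n => f [ffun i => x (p i)]].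

Definition Phi n (p : 'S_n) : {set bfun n} := [set f in D n | act p f == f].
Definition phi n (p : 'S_n) : nat := #|Phi p|.

Definition incidence_mx (T : finType) (le : rel T) (A : {set T}) : 'M[int]_#|A| :=
  \matrix_(i, j) (le (enum_val i) (enum_val j))%:R.

(* A permutation of 'I_n given by its (0-based) list of images. *)
Definition perm_fun n (s : seq nat) : 'I_n.+1 -> 'I_n.+1 :=
  fun i => inord (nth 0%N s i).

(* (12)(3456) in S_6, 0-based: 0<->1, 2->3->4->5->2 *)
Lemma pi6_inj : injective (@perm_fun 5 [:: 1; 0; 3; 4; 5; 2]%N).
Proof.
move=> [[|[|[|[|[|[|//]]]]]] ?] [[|[|[|[|[|[|//]]]]]] ?];
  move/(congr1 val); rewrite /perm_fun /= !inordK //; by move=> H; apply: val_inj.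
Qed.
Definition pi6 : 'S_6 := perm pi6_inj.

(* (12)(345)(6789) in S_9, 0-based: 0<->1, 2->3->4->2, 5->6->7->8->5 *)
Lemma sigma9_inj : injective (@perm_fun 8 [:: 1; 0; 3; 4; 2; 6; 7; 8; 5]%N).
Proof.
move=> [[|[|[|[|[|[|[|[|[|//]]]]]]]]] ?] [[|[|[|[|[|[|[|[|[|//]]]]]]]]] ?];
  move/(congr1 val); rewrite /perm_fun /= !inordK //; by move=> H; apply: val_inj.
Qed.
Definition sigma9 : 'S_9 := perm sigma9_inj.

(* Main.v *)
Require Import Defs.
From Stdlib Require Import NArith Lia.
From mathcomp Require Import all_boot all_order all_algebra all_fingroup.
Import GRing.Theory.
Set Implicit Arguments. Unset Strict Implicit. Unset Printing Implicit Defensive.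

Section Bridge.
Variable n : nat.
Definition bl (x : vec n) : seq bool := map x (enum 'I_n).
Definition mk (s : seq bool) : vec n := [ffun i : 'I_n => nth false s i].

Lemma size_bl x : size (bl x) = n.
Proof. by rewrite size_map size_enum_ord. Qed.

Lemma nth_bl x (i : 'I_n) : nth false (bl x) i = x i.
Proof. by rewrite (nth_map i) ?size_enum_ord // nth_ord_enum. Qed.

Lemma bl_inj : injective bl.
Proof. by move=> x y E; apply/ffunP => i; rewrite -!nth_bl E. Qed.

Lemma mk_bl x : mk (bl x) = x.
Proof. by apply/ffunP => i; rewrite ffunE nth_bl. Qed.

Lemma bl_mk s : size s = n -> bl (mk s) = s.
Proof.
move=> Hs; apply: (@eq_from_nth _ false); first by rewrite size_bl.
move=> k; rewrite size_bl => Hk.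
by rewrite (nth_bl (mk s) (Ordinal Hk)) ffunE.
Qed.

Definition vleL (s t : seq bool) :=
  all (fun k => nth false s k ==> nth false t k) (iota 0 (size s)).

Lemma vleE x y : vle x y = vleL (bl x) (bl y).
Proof.
rewrite /vle /vleL size_bl; apply/forallP/allP => H.
  by move=> k; rewrite mem_iota /= => Hk; rewrite (nth_bl x (Ordinal Hk)) (nth_bl y (Ordinal Hk)).
by move=> i; rewrite -!nth_bl; apply: H; rewrite mem_iota /=.
Qed.

Definition permL (pl : seq nat) (s : seq bool) := map (fun k => nth false s k) pl.

Definition pact (p : 'S_n) (z : vec n) : vec n := [ffun i => z (p i)].

Lemma bl_pact (p : 'S_n) pl x : size pl = n -> (forall i : 'I_n, val (p i) = nth 0 pl i) ->
  bl (pact p x) = permL pl (bl x).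
Proof.
move=> Hs Hp; apply: (@eq_from_nth _ false); first by rewrite size_bl size_map Hs.
move=> k; rewrite size_bl => Hk.
rewrite (nth_bl _ (Ordinal Hk)) ffunE /permL (nth_map 0) ?Hs //.
by rewrite -(Hp (Ordinal Hk)) nth_bl.
Qed.

Lemma bl_iter (p : 'S_n) pl x j : size pl = n -> (forall i : 'I_n, val (p i) = nth 0 pl i) ->
  bl (iter j (pact p) x) = iter j (permL pl) (bl x).
Proof. by move=> Hs Hp; elim: j => //= j IH; rewrite (bl_pact _ Hs Hp) IH. Qed.

Fixpoint allbl m : seq (seq bool) :=
  if m is m'.+1 then map (cons false) (allbl m') ++ map (cons true) (allbl m') else [:: [::]].

Lemma mem_allbl m s : (s \in allbl m) = (size s == m).
Proof.
elim: m s => [|m IH] s; first by case: s.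
case: s => [|b s].
  by rewrite mem_cat; apply/negP => /orP[] /mapP[].
have Hi c : injective (cons c : seq bool -> seq bool) by move=> u v [].
rewrite mem_cat /= eqSS -IH; case: b.
  rewrite (mem_map (Hi true)).
  by have -> : (true::s \in map (cons false) (allbl m)) = false by apply/mapP => -[t _ []].
rewrite (mem_map (Hi false)).
have -> : (false::s \in map (cons true) (allbl m)) = false by apply/mapP => -[t _ []].
by rewrite orbF.
Qed.

Lemma bl_in x : bl x \in allbl n.
Proof. by rewrite mem_allbl size_bl. Qed.

Lemma in_Phi (p : 'S_n) f : f \in Phi p -> forall x, f (pact p x) = f x.
Proof.
rewrite inE => /andP[_ /eqP E] x.
by rewrite -{2}E /act ffunE.
Qed.

Lemma in_Phi_iter (p : 'S_n) f j x : f \in Phi p -> f (iter j (pact p) x) = f x.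
Proof. by move=> H; elim: j => //= j IH; rewrite in_Phi. Qed.

Lemma Phi_mono (p : 'S_n) f x y : f \in Phi p -> vle x y -> f x -> f y.
Proof.
rewrite inE inE => /andP[/forallP H _] Hxy.
by move: (H x) => /forallP /(_ y) /implyP /(_ Hxy) /implyP.
Qed.

End Bridge.

Definition IXT : seq nat := [:: 0; 1; 1; 2; 3; 4; 5; 6; 3; 5; 4; 6; 7; 8; 9; 10; 3; 4; 5; 6; 11; 12; 13; 14; 7; 9; 8; 10; 15; 16; 17; 18; 3; 5; 4; 6; 7; 9; 8; 10; 11; 13; 12; 14; 15; 17; 16; 18; 7; 8; 9; 10; 15; 16; 17; 18; 15; 17; 16; 18; 19; 20; 20; 21].
Definition reps : seq (seq bool) := [:: [:: false; false; false; false; false; false];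
  [:: true; false; false; false; false; false];
  [:: true; true; false; false; false; false];
  [:: false; false; true; false; false; false];
  [:: true; false; true; false; false; false];
  [:: false; true; true; false; false; false];
  [:: true; true; true; false; false; false];
  [:: false; false; true; true; false; false];
  [:: true; false; true; true; false; false];
  [:: false; true; true; true; false; false];
  [:: true; true; true; true; false; false];
  [:: false; false; true; false; true; false];
  [:: true; false; true; false; true; false];
  [:: false; true; true; false; true; false];
  [:: true; true; true; false; true; false];
  [:: false; false; true; true; true; false];
  [:: true; false; true; true; true; false];
  [:: false; true; true; true; true; false];
  [:: true; true; true; true; true; false];
  [:: false; false; true; true; true; true];
  [:: true; false; true; true; true; true];
  [:: true; true; true; true; true; true]].
Definition Rt : seq (seq bool) := [:: [:: true; true; true; true; true; true; true; true; true; true; true; true; true; true; true; true; true; true; true; true; true; true];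
  [:: false; true; true; false; true; true; true; false; true; true; true; false; true; true; true; false; true; true; true; false; true; true];
  [:: false; false; true; false; false; false; true; false; false; false; true; false; false; false; true; false; false; false; true; false; false; true];
  [:: false; false; false; true; true; true; true; true; true; true; true; true; true; true; true; true; true; true; true; true; true; true];
  [:: false; false; false; false; true; false; true; false; true; true; true; false; true; false; true; false; true; true; true; false; true; true];
  [:: false; false; false; false; false; true; true; false; true; true; true; false; false; true; true; false; true; true; true; false; true; true];
  [:: false; false; false; false; false; false; true; false; false; false; true; false; false; false; true; false; false; false; true; false; false; true];
  [:: false; false; false; false; false; false; false; true; true; true; true; false; false; false; false; true; true; true; true; true; true; true];
  [:: false; false; false; false; false; false; false; false; true; false; true; false; false; false; false; false; true; true; true; false; true; true];
  [:: false; false; false; false; false; false; false; false; false; true; true; false; false; false; false; false; true; true; true; false; true; true];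
  [:: false; false; false; false; false; false; false; false; false; false; true; false; false; false; false; false; false; false; true; false; false; true];
  [:: false; false; false; false; false; false; false; false; false; false; false; true; true; true; true; true; true; true; true; true; true; true];
  [:: false; false; false; false; false; false; false; false; false; false; false; false; true; false; true; false; true; false; true; false; true; true];
  [:: false; false; false; false; false; false; false; false; false; false; false; false; false; true; true; false; false; true; true; false; true; true];
  [:: false; false; false; false; false; false; false; false; false; false; false; false; false; false; true; false; false; false; true; false; false; true];
  [:: false; false; false; false; false; false; false; false; false; false; false; false; false; false; false; true; true; true; true; true; true; true];
  [:: false; false; false; false; false; false; false; false; false; false; false; false; false; false; false; false; true; false; true; false; true; true];
  [:: false; false; false; false; false; false; false; false; false; false; false; false; false; false; false; false; false; true; true; false; true; true];
  [:: false; false; false; false; false; false; false; false; false; false; false; false; false; false; false; false; false; false; true; false; false; true];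
  [:: false; false; false; false; false; false; false; false; false; false; false; false; false; false; false; false; false; false; false; true; true; true];
  [:: false; false; false; false; false; false; false; false; false; false; false; false; false; false; false; false; false; false; false; false; true; true];
  [:: false; false; false; false; false; false; false; false; false; false; false; false; false; false; false; false; false; false; false; false; false; true]].
Definition num (s : seq bool) : nat := foldr (fun (b : bool) (a : nat) => (b : nat) + a.*2) 0 s.
Definition ixL s := nth 0 IXT (num s).
Definition rep k := nth [::] reps k.
Definition pl6 : seq nat := [:: 1; 0; 3; 4; 5; 2].
Definition pl9 : seq nat := [:: 1; 0; 3; 4; 2; 6; 7; 8; 5].
Definition Rel k l := nth false (nth [::] Rt k) l.

Lemma C1 : all (fun s => ixL s < 22) (allbl 6).
Proof. vm_compute. reflexivity. Qed.
Lemma C2 : all (fun s => has (fun j => iter j (permL pl6) s == rep (ixL s)) (iota 0 4)) (allbl 6).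
Proof. vm_compute. reflexivity. Qed.
Lemma C3 : all (fun s => all (fun t => vleL s t ==> Rel (ixL s) (ixL t)) (allbl 6)) (allbl 6).
Proof. vm_compute. reflexivity. Qed.
Lemma C4 : all (fun k => all (fun l => Rel k l ==> has (fun j => vleL (rep k) (iter j (permL pl6) (rep l))) (iota 0 4)) (iota 0 22)) (iota 0 22).
Proof. vm_compute. reflexivity. Qed.
Lemma C5 : all (fun k => (ixL (rep k) == k) && (size (rep k) == 6)) (iota 0 22).
Proof. vm_compute. reflexivity. Qed.
Lemma C6 : all (fun s => ixL (permL pl6 s) == ixL s) (allbl 6).
Proof. vm_compute. reflexivity. Qed.

Definition goodn (t : seq bool) :=
  all (fun j => all (fun k => Rel j k ==> nth false t j ==> nth false t k) (iota 0 (size t))) (iota 0 (size t)).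
Fixpoint gen m : seq (seq bool) :=
  if m is m'.+1 then
    let g := gen m' in
    filter goodn (map (fun s => rcons s false) g ++ map (fun s => rcons s true) g)
  else [:: [::]].
Definition Lb := gen 22.
Lemma sizeLb : size Lb = 324.
Proof. vm_compute. reflexivity. Qed.
Lemma uniqLb : uniq Lb.
Proof. vm_compute. reflexivity. Qed.

Lemma goodn_rcons s b : goodn (rcons s b) -> goodn s.
Proof.
move=> /allP H; apply/allP => j; rewrite mem_iota /= => Hj.
have Hj' : j \in iota 0 (size (rcons s b)) by rewrite size_rcons mem_iota /= ltnS ltnW.
move: (H j Hj') => /allP H2.
apply/allP => k; rewrite mem_iota /= => Hk.
have Hk' : k \in iota 0 (size (rcons s b)) by rewrite size_rcons mem_iota /= ltnS ltnW.
by move: (H2 k Hk'); rewrite !nth_rcons Hj Hk.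
Qed.

Lemma mem_gen m t : (t \in gen m) = (size t == m) && goodn t.
Proof.
elim: m t => [|m IH] t /=.
  by case: t.
rewrite mem_filter mem_cat; case G: (goodn t); rewrite ?andbT ?andbF //=.
apply/idP/idP.
  by move=> /orP[] /mapP[s]; rewrite IH => /andP[/eqP <- _] ->; rewrite size_rcons.
case/lastP: t G => // s b G; rewrite size_rcons eqSS => Hs.
have Hg : s \in gen m by rewrite IH Hs (goodn_rcons G).
by case: b {G}; apply/orP; [right|left]; apply: map_f.
Qed.

Lemma pi6E (i : 'I_6) : val (pi6 i) = nth 0 pl6 i.
Proof. rewrite /pi6 permE /perm_fun; case: i => [[|[|[|[|[|[|//]]]]]] Hi]; exact: inordK. Qed.
Lemma spl6 : size pl6 = 6. Proof. by []. Qed.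

Lemma c1 (x : vec 6) : ixL (bl x) < 22.
Proof. exact: (allP C1 _ (bl_in x)). Qed.
Lemma c2 (x : vec 6) : exists j, iter j (permL pl6) (bl x) = rep (ixL (bl x)).
Proof. by have /hasP[j _ /eqP E] := allP C2 _ (bl_in x); exists j. Qed.
Lemma c3 (x y : vec 6) : vle x y -> Rel (ixL (bl x)) (ixL (bl y)).
Proof. by rewrite vleE => H; have /allP/(_ _ (bl_in y))/implyP := allP C3 _ (bl_in x); apply. Qed.
Lemma c4 k l : k < 22 -> l < 22 -> Rel k l -> exists j, vleL (rep k) (iter j (permL pl6) (rep l)).
Proof.
move=> Hk Hl H.
have Hk' : k \in iota 0 22 by rewrite mem_iota.
have Hl' : l \in iota 0 22 by rewrite mem_iota.
have /implyP/(_ H)/hasP[j _ ?] := allP (allP C4 k Hk') l Hl'.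
by exists j.
Qed.
Lemma c5 k : k < 22 -> ixL (rep k) = k /\ size (rep k) = 6.
Proof.
move=> Hk; have Hk' : k \in iota 0 22 by rewrite mem_iota.
by have /andP[/eqP ? /eqP ?] := allP C5 k Hk'.
Qed.
Lemma c6 (x : vec 6) : ixL (bl (pact pi6 x)) = ixL (bl x).
Proof. by rewrite (bl_pact _ spl6 pi6E); apply/eqP/(allP C6 _ (bl_in x)). Qed.

Lemma size_iter j s : size s = 6 -> size (iter j (permL pl6) s) = 6.
Proof. by move=> H; elim: j => //= j IH; rewrite size_map. Qed.

Definition h (b : seq bool) : bfun 6 := [ffun x => nth false b (ixL (bl x))].
Definition F6 (f : bfun 6) : seq bool := [seq f (mk 6 r) | r <- reps].

Lemma Phi_rep f x : f \in Phi pi6 -> f x = f (mk 6 (rep (ixL (bl x)))).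
Proof.
move=> Hf; have [j <-] := c2 x.
by rewrite -(bl_iter _ _ spl6 pi6E) mk_bl in_Phi_iter.
Qed.

Lemma h_F6 f : f \in Phi pi6 -> h (F6 f) = f.
Proof.
move=> Hf; apply/ffunP => x; rewrite ffunE /F6 (nth_map [::]) ?(Phi_rep x Hf) //.
exact: c1.
Qed.

Lemma F6_in f : f \in Phi pi6 -> F6 f \in Lb.
Proof.
move=> Hf; rewrite mem_gen; apply/andP; split; first by rewrite size_map.
apply/allP => k; rewrite /goodn size_map mem_iota => /andP[_ Hk].
apply/allP => l; rewrite mem_iota => /andP[_ Hl]; apply/implyP => HR.
rewrite /F6 !(nth_map [::]) //.
have [j Hv] := c4 Hk Hl HR.
have [_ Sk] := c5 Hk; have [_ Sl] := c5 Hl.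
apply/implyP => Hfk.
rewrite -(in_Phi_iter j (mk 6 (rep l)) Hf).
apply: (Phi_mono Hf _ Hfk).
rewrite vleE (bl_iter _ _ spl6 pi6E) !bl_mk //.
Qed.

Lemma h_in b : b \in Lb -> h b \in Phi pi6.
Proof.
rewrite mem_gen => /andP[/eqP Sb Gb].
rewrite !inE; apply/andP; split.
  apply/forallP => x; apply/forallP => y; apply/implyP => Hxy; rewrite !ffunE.
  move: Gb => /allP Gb.
  have Hx := c1 x; have Hy := c1 y; have HR := c3 Hxy.
  have Hx' : ixL (bl x) \in iota 0 (size b) by rewrite Sb mem_iota.
  have Hy' : ixL (bl y) \in iota 0 (size b) by rewrite Sb mem_iota.
  by have /implyP/(_ HR) := allP (Gb _ Hx') _ Hy'.
apply/eqP/ffunP => x; rewrite /act !ffunE.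
exact: (congr1 _ (c6 x)).
Qed.

Lemma F6_h b : b \in Lb -> F6 (h b) = b.
Proof.
rewrite mem_gen => /andP[/eqP Sb _].
apply: (@eq_from_nth _ false); first by rewrite size_map Sb.
move=> k; rewrite size_map => Hk; rewrite (nth_map [::]) // ffunE.
have [E S] := c5 Hk.
by rewrite bl_mk // E.
Qed.

Lemma fle_h b b' : b \in Lb -> b' \in Lb -> fle (h b) (h b') = vleL b b'.
Proof.
move=> Hb Hb'; have := Hb; rewrite mem_gen => /andP[/eqP Sb _].
apply/forallP/allP => [H k|H x].
  rewrite Sb mem_iota /= => Hk; have := H (mk 6 (rep k)); rewrite !ffunE.
  by have [E S] := c5 Hk; rewrite bl_mk // E.
rewrite !ffunE; apply: H; rewrite Sb mem_iota /=; exact: c1.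
Qed.

Definition embL (xs ys : seq bool) := take 2 xs ++ ys ++ drop 2 xs.
Definition projL (zs : seq bool) := take 2 zs ++ drop 5 zs.
Definition wL (zs : seq bool) := count id (take 3 (drop 2 zs)).
Definition ykL k := nseq k true ++ nseq (3 - k) false.

Lemma E2 : all (fun xs => all (fun k => iter 9 (permL pl9) (embL xs (ykL k)) == embL (permL pl6 xs) (ykL k)) (iota 0 4)) (allbl 6).
Proof. vm_compute. reflexivity. Qed.
Lemma E3 : all (fun xs => all (fun xs' => vleL xs xs' ==> all (fun k => vleL (embL xs (ykL k)) (embL xs' (ykL k))) (iota 0 4)) (allbl 6)) (allbl 6).
Proof. vm_compute. reflexivity. Qed.
Lemma E3b : all (fun xs => all (fun k => vleL (embL xs (ykL k)) (embL xs (ykL k.+1))) (iota 0 3)) (allbl 6).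
Proof. vm_compute. reflexivity. Qed.
Lemma E4 : all (fun zs => all (fun zs' => vleL zs zs' ==> vleL (projL zs) (projL zs') && (wL zs <= wL zs')) (allbl 9)) (allbl 9).
Proof. vm_compute. reflexivity. Qed.
Lemma E5 : all (fun zs => has (fun j => iter j (permL pl9) zs == embL (projL zs) (ykL (wL zs))) [:: 0; 4; 8]) (allbl 9).
Proof. vm_compute. reflexivity. Qed.
Lemma E6 : all (fun xs => all (fun k => [&& wL (embL xs (ykL k)) == k, projL (embL xs (ykL k)) == xs & size (embL xs (ykL k)) == 9]) (iota 0 4)) (allbl 6).
Proof. vm_compute. reflexivity. Qed.
Lemma E7 : all (fun zs => [&& wL (permL pl9 zs) == wL zs, projL (permL pl9 zs) == permL pl6 (projL zs), wL zs < 4 & size (projL zs) == 6]) (allbl 9).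
Proof. vm_compute. reflexivity. Qed.

Lemma sigma9E (i : 'I_9) : val (sigma9 i) = nth 0 pl9 i.
Proof. rewrite /sigma9 permE /perm_fun; case: i => [[|[|[|[|[|[|[|[|[|//]]]]]]]]] Hi]; exact: inordK. Qed.
Lemma pi6E' (i : 'I_6) : val (pi6 i) = nth 0 pl6 i.
Proof. rewrite /pi6 permE /perm_fun; case: i => [[|[|[|[|[|[|//]]]]]] Hi]; exact: inordK. Qed.
Lemma spl9 : size pl9 = 9. Proof. by []. Qed.
Lemma spl6' : size pl6 = 6. Proof. by []. Qed.

Lemma in4 k : k < 4 -> k \in iota 0 4. Proof. by rewrite mem_iota. Qed.

Lemma e2 (x : vec 6) k : k < 4 -> iter 9 (permL pl9) (embL (bl x) (ykL k)) = embL (bl (pact pi6 x)) (ykL k).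
Proof. by move=> Hk; rewrite (bl_pact _ spl6' pi6E'); apply/eqP/(allP (allP E2 _ (bl_in x)) _ (in4 Hk)). Qed.
Lemma e3 (x x' : vec 6) k : k < 4 -> vle x x' -> vleL (embL (bl x) (ykL k)) (embL (bl x') (ykL k)).
Proof.
move=> Hk; rewrite vleE => H.
by have /implyP/(_ H)/allP/(_ _ (in4 Hk)) := allP (allP E3 _ (bl_in x)) _ (bl_in x').
Qed.
Lemma e3b (x : vec 6) k : k < 3 -> vleL (embL (bl x) (ykL k)) (embL (bl x) (ykL k.+1)).
Proof. by move=> Hk; apply: (allP (allP E3b _ (bl_in x))); rewrite mem_iota. Qed.
Lemma e4 (z z' : vec 9) : vle z z' -> vleL (projL (bl z)) (projL (bl z')) && (wL (bl z) <= wL (bl z')).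
Proof. by rewrite vleE => H; have /implyP/(_ H) := allP (allP E4 _ (bl_in z)) _ (bl_in z'). Qed.
Lemma e5 (z : vec 9) : exists j, iter j (permL pl9) (bl z) = embL (projL (bl z)) (ykL (wL (bl z))).
Proof. by have /hasP[j _ /eqP E] := allP E5 _ (bl_in z); exists j. Qed.
Lemma e6 (x : vec 6) k : k < 4 ->
  [/\ wL (embL (bl x) (ykL k)) = k, projL (embL (bl x) (ykL k)) = bl x & size (embL (bl x) (ykL k)) = 9].
Proof. by move=> Hk; have /and3P[/eqP ? /eqP ? /eqP ?] := allP (allP E6 _ (bl_in x)) _ (in4 Hk). Qed.
Lemma e7 (z : vec 9) :
  [/\ wL (permL pl9 (bl z)) = wL (bl z), projL (permL pl9 (bl z)) = permL pl6 (projL (bl z)),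
      wL (bl z) < 4 & size (projL (bl z)) = 6].
Proof. by have /and4P[/eqP ? /eqP ? ? /eqP ?] := allP E7 _ (bl_in z). Qed.

Lemma fleP n (f g : bfun n) x : fle f g -> f x -> g x.
Proof. by move=> /forallP/(_ x)/implyP. Qed.

Lemma size_ykL k : k < 4 -> size (ykL k) = 3.
Proof. by case: k => [|[|[|[|]]]]. Qed.

Definition T4 := ((bfun 6 * bfun 6) * (bfun 6 * bfun 6))%type.
Definition gk (f : bfun 9) k : bfun 6 := [ffun x => f (mk 9 (embL (bl x) (ykL k)))].
Definition F9 (f : bfun 9) : T4 := ((gk f 0, gk f 1), (gk f 2, gk f 3)).
Definition sel (t : T4) k := nth t.1.1 [:: t.1.1; t.1.2; t.2.1; t.2.2] k.
Definition G9 (t : T4) : bfun 9 := [ffun z => sel t (wL (bl z)) (mk 6 (projL (bl z)))].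

Definition Cpred (t : T4) :=
  [&& ((t.1.1 \in Phi pi6) && (t.1.2 \in Phi pi6)) && ((t.2.1 \in Phi pi6) && (t.2.2 \in Phi pi6)),
      fle t.1.1 t.1.2, fle t.1.2 t.2.1 & fle t.2.1 t.2.2].

Lemma gk_in f k : f \in Phi sigma9 -> k < 4 -> gk f k \in Phi pi6.
Proof.
move=> Hf Hk; rewrite !inE; apply/andP; split.
  apply/forallP => x; apply/forallP => y; apply/implyP => Hxy; rewrite !ffunE.
  apply/implyP; apply: (Phi_mono Hf).
  have [_ _ S1] := e6 x Hk; have [_ _ S2] := e6 y Hk.
  by rewrite vleE !bl_mk //; apply: e3.
apply/eqP/ffunP => x; rewrite /act !ffunE.
have [_ _ S1] := e6 x Hk.
rewrite -(e2 x Hk) -(bl_mk S1) -(bl_iter _ _ spl9 sigma9E) mk_bl.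
by rewrite (in_Phi_iter _ _ Hf) mk_bl.
Qed.

Lemma gk_le f k : f \in Phi sigma9 -> k < 3 -> fle (gk f k) (gk f k.+1).
Proof.
move=> Hf Hk; apply/forallP => x; rewrite !ffunE; apply/implyP; apply: (Phi_mono Hf).
have [_ _ S1] := e6 x (ltnW (Hk : k.+1 < 4)); have [_ _ S2] := e6 x (Hk : k.+1 < 4).
by rewrite vleE !bl_mk //; apply: e3b.
Qed.

Lemma F9_in f : f \in Phi sigma9 -> Cpred (F9 f).
Proof.
move=> Hf; rewrite /Cpred /= !gk_in //=.
by rewrite !gk_le.
Qed.

Lemma sel_in t k : Cpred t -> k < 4 -> sel t k \in Phi pi6.
Proof.
case: t => [[a b] [c d]] /and4P[/andP[/andP[? ?] /andP[? ?]] _ _ _].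
by case: k => [|[|[|[|]]]].
Qed.

Lemma sel_le t i j x : Cpred t -> i <= j -> j < 4 -> sel t i x -> sel t j x.
Proof.
case: t => [[a b] [c d]] /and4P[_ H1 H2 H3] /=.
have L1 : a x -> b x := fleP H1.
have L2 : b x -> c x := fleP H2.
have L3 : c x -> d x := fleP H3.
case: i => [|[|[|[|i]]]]; case: j => [|[|[|[|j]]]] //= _ _; rewrite /sel /=; try by auto.
Qed.

Lemma G9_in t : Cpred t -> G9 t \in Phi sigma9.
Proof.
move=> Ht; rewrite !inE; apply/andP; split.
  apply/forallP => z; apply/forallP => z'; apply/implyP => Hzz'; rewrite !ffunE; apply/implyP => H.
  have /andP[Hp Hw] := e4 Hzz'.
  have [_ _ W1 S1] := e7 z; have [_ _ W2 S2] := e7 z'.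
  apply: (sel_le Ht Hw W2).
  apply: (Phi_mono (sel_in Ht W1) _ H).
  by rewrite vleE !bl_mk.
apply/eqP/ffunP => z; rewrite /act !ffunE.
rewrite -/(pact sigma9 z) (bl_pact _ spl9 sigma9E).
have [E1 E2 W S] := e7 z.
rewrite E1 E2.
have -> : mk 6 (permL pl6 (projL (bl z))) = pact pi6 (mk 6 (projL (bl z))).
  by apply: bl_inj; rewrite (bl_pact _ spl6' pi6E') !bl_mk // size_map.
by rewrite (in_Phi (sel_in Ht W)).
Qed.

Lemma G9F9 f : f \in Phi sigma9 -> G9 (F9 f) = f.
Proof.
move=> Hf; apply/ffunP => z; rewrite ffunE.
have [_ _ W S] := e7 z.
have -> : sel (F9 f) (wL (bl z)) = gk f (wL (bl z)) by move: W; case: (wL (bl z)) => [|[|[|[|]]]].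
rewrite ffunE bl_mk //.
have [j <-] := e5 z.
by rewrite -(bl_iter _ _ spl9 sigma9E) mk_bl in_Phi_iter.
Qed.

Lemma F9G9 t : Cpred t -> F9 (G9 t) = t.
Proof.
move=> Ht.
have E k : k < 4 -> gk (G9 t) k = sel t k.
  move=> Hk; apply/ffunP => x; rewrite !ffunE.
  have [W P S] := e6 x Hk.
  by rewrite bl_mk // W P mk_bl.
case: t Ht E => [[a b] [c d]] _ E.
by rewrite /F9 !E.
Qed.

Lemma card_bij (T U : finType) (A : {set T}) (B : {set U}) (f : T -> U) (g : U -> T) :
  {in A, forall x, f x \in B} -> {in B, forall y, g y \in A} ->
  {in A, cancel f g} -> {in B, cancel g f} -> #|A| = #|B|.
Proof.
move=> fB gA fK gK.
have E : f @: A = B.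
  apply/setP => y; apply/imsetP/idP => [[x Hx ->]|Hy]; first exact: fB.
  by exists (g y); [apply: gA | rewrite gK].
by rewrite -E card_in_imset //; apply: can_in_inj fK.
Qed.

Lemma phi9_card : phi sigma9 = #|[set t : T4 | Cpred t]|.
Proof.
apply: (card_bij (f := F9) (g := G9)).
- by move=> f Hf; rewrite inE; apply: F9_in.
- by move=> t; rewrite inE => Ht; apply: G9_in.
- exact: G9F9.
- by move=> t; rewrite inE; apply: F9G9.
Qed.

Lemma sum_Phi (G : bfun 6 -> nat) : \sum_(f in Phi pi6) G f = \sum_(s <- Lb) G (h s).
Proof.
rewrite -(big_map h xpredT G) big_uniq; last first.
  rewrite map_inj_in_uniq ?uniqLb // => s t Hs Ht E.
  by rewrite -(F6_h Hs) -(F6_h Ht) E.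
apply: eq_bigl => f; apply/idP/idP => [Hf|/mapP[s Hs ->]]; last exact: h_in.
by rewrite -(h_F6 Hf); apply: map_f; apply: F6_in.
Qed.

Definition N6 := \sum_(a in Phi pi6) \sum_(b in Phi pi6) \sum_(c in Phi pi6) \sum_(d in Phi pi6)
   (fle a b * fle b c * fle c d).

Lemma sum_bool (T : finType) (P Q : pred T) :
  \sum_(t | P t) (Q t : nat) = #|[set t | P t && Q t]|.
Proof.
rewrite -sum1_card; under [RHS]eq_bigl => t do rewrite inE.
by rewrite big_mkcondr /=; apply: eq_bigr => t _; case: (Q t).
Qed.

Lemma N6_card : N6 = #|[set t : T4 | Cpred t]|.
Proof.
rewrite /N6.
under eq_bigr => a _ do under eq_bigr => b _ do rewrite pair_big /=.
rewrite pair_big /= pair_big /=.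
rewrite (eq_bigr (fun t : T4 => nat_of_bool [&& fle t.1.1 t.1.2, fle t.1.2 t.2.1 & fle t.2.1 t.2.2])); last first.
  by move=> t _; case: (fle _ _); case: (fle _ _); case: (fle _ _).
by rewrite sum_bool.
Qed.

Section Count.
Variable L : seq (seq bool).
Definition d1 c := \sum_(d <- L) (vleL c d : nat).
Definition d2 b := \sum_(c <- L) (vleL b c * d1 c).
Definition d3 a := \sum_(b <- L) (vleL a b * d2 b).
Definition tot := \sum_(a <- L) d3 a.

Lemma tot_eq : \sum_(a <- L) \sum_(b <- L) \sum_(c <- L) \sum_(d <- L)
   (vleL a b * vleL b c * vleL c d) = tot.
Proof.
apply: eq_bigr => a _; rewrite /d3; apply: eq_bigr => b _.
rewrite /d2 big_distrr; apply: eq_bigr => c _.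
by rewrite /d1 -[RHS]/(vleL a b * (vleL b c * \sum_(d <- L) (vleL c d : nat))) mulnA big_distrr.
Qed.

Definition d1N c := foldr (fun d acc => ((if vleL c d then 1 else 0) + acc)%num) 0%num L.
Definition stepN (Q : seq (seq bool * N)) b :=
  foldr (fun p acc => ((if vleL b p.1 then p.2 else 0) + acc)%num) 0%num Q.
Definition totN :=
  let Q1 := map (fun c => (c, d1N c)) L in
  let Q2 := map (fun b => (b, stepN Q1 b)) L in
  foldr (fun a acc => (stepN Q2 a + acc)%num) 0%num L.

Lemma sumN (F : seq bool -> nat) r :
  N.of_nat (\sum_(x <- r) F x) = foldr (fun x acc => (N.of_nat (F x) + acc)%num) 0%num r.
Proof. by elim: r => [|x r IH]; rewrite ?big_nil ?big_cons //= Nat2N.inj_add IH. Qed.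

Lemma d1E c : N.of_nat (d1 c) = d1N c.
Proof. by rewrite /d1 sumN /d1N; elim: L => //= d r ->; case: (vleL c d). Qed.

Lemma stepE (g : seq bool -> nat) (gN : seq bool -> N) b :
  (forall x, N.of_nat (g x) = gN x) ->
  N.of_nat (\sum_(c <- L) (vleL b c * g c)) = stepN (map (fun c => (c, gN c)) L) b.
Proof.
move=> H; rewrite sumN /stepN; elim: L => //= c r ->.
by case: (vleL b c); rewrite ?mul1n ?mul0n ?H.
Qed.

Lemma foldr_ext (f1 f2 : seq bool -> N) r : f1 =1 f2 ->
  foldr (fun x acc => (f1 x + acc)%num) 0%num r = foldr (fun x acc => (f2 x + acc)%num) 0%num r.
Proof. by move=> E; elim: r => //= x r ->; rewrite E. Qed.

Lemma totE : N.of_nat tot = totN.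
Proof.
rewrite /tot sumN /totN.
have E2 x : N.of_nat (d2 x) = stepN (map (fun c => (c, d1N c)) L) x by rewrite /d2 (stepE _ d1E).
have E3 x : N.of_nat (d3 x) = stepN (map (fun b => (b, stepN (map (fun c => (c, d1N c)) L) b)) L) x.
  by rewrite /d3 (stepE _ E2).
by cbv zeta; apply: foldr_ext => x; rewrite E3.
Qed.
End Count.

Lemma totN_val : totN Lb = 22062570%num.
Proof. vm_compute. reflexivity. Qed.

Local Open Scope ring_scope.

Lemma cube_sum m (M : 'M[int]_m) :
  \sum_i \sum_j (M *m M *m M) i j = \sum_i \sum_k \sum_l \sum_j (M i k * M k l * M l j).
Proof.
apply: eq_bigr => i _.
under eq_bigr => j _ do rewrite mxE.
under eq_bigr => j _ do under eq_bigr => l _ do rewrite mxE big_distrl /=.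
rewrite exchange_big /=.
under eq_bigr => l _ do rewrite exchange_big /=.
rewrite exchange_big /=.
done.
Qed.

Lemma int_part : let Z := incidence_mx (@fle 6) (Phi pi6) in
  \sum_i \sum_j (Z *m Z *m Z) i j = (N6)%:Z.
Proof.
move=> Z; rewrite cube_sum /Z /incidence_mx.
under eq_bigr => i _ do under eq_bigr => k _ do under eq_bigr => l _ do under eq_bigr => j _ do rewrite !mxE -!natrM.
under eq_bigr => i _ do under eq_bigr => k _ do under eq_bigr => l _ do rewrite -natr_sum.
under eq_bigr => i _ do under eq_bigr => k _ do rewrite -natr_sum.
under eq_bigr => i _ do rewrite -natr_sum.
rewrite -natr_sum natz; congr Posz.
rewrite /N6 [RHS]big_enum_val /=.
under [RHS]eq_bigr => i _ do rewrite big_enum_val.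
under [RHS]eq_bigr => i _ do under eq_bigr => k _ do rewrite big_enum_val.
under [RHS]eq_bigr => i _ do under eq_bigr => k _ do under eq_bigr => l _ do rewrite big_enum_val.
by [].
Qed.

Lemma N6_Lb : N6 = \sum_(a <- Lb) \sum_(b <- Lb) \sum_(c <- Lb) \sum_(d <- Lb)
   (vleL a b * vleL b c * vleL c d)%N.
Proof.
rewrite /N6 sum_Phi; apply: eq_big_seq => a Ha.
rewrite sum_Phi; apply: eq_big_seq => b Hb.
rewrite sum_Phi; apply: eq_big_seq => c Hc.
rewrite sum_Phi; apply: eq_big_seq => d Hd.
by rewrite !fle_h.
Qed.

Fixpoint NA (d : Decimal.uint) (a : N) : N :=
  match d with
  | Decimal.Nil => a
  | Decimal.D0 d => NA d (10 * a)%num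
  | Decimal.D1 d => NA d (10 * a + 1)%num
  | Decimal.D2 d => NA d (10 * a + 2)%num
  | Decimal.D3 d => NA d (10 * a + 3)%num
  | Decimal.D4 d => NA d (10 * a + 4)%num
  | Decimal.D5 d => NA d (10 * a + 5)%num
  | Decimal.D6 d => NA d (10 * a + 6)%num
  | Decimal.D7 d => NA d (10 * a + 7)%num
  | Decimal.D8 d => NA d (10 * a + 8)%num
  | Decimal.D9 d => NA d (10 * a + 9)%num
  end.
Lemma of_uint_N d acc : N.of_nat (Nat.of_uint_acc d acc) = NA d (N.of_nat acc).
Proof.
elim: d acc => // d IH acc; cbn [Nat.of_uint_acc NA]; rewrite IH; congr NA;
  rewrite ?Nat2N.inj_succ PeanoNat.Nat.tail_mul_spec Nat2N.inj_mul; lia.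
Qed.

Lemma phi_val : phi sigma9 = 22062570%N.
Proof.
rewrite phi9_card -N6_card N6_Lb tot_eq.
apply: Nat2N.inj; rewrite totE totN_val.
rewrite /Nat.of_num_uint /Nat.of_uint of_uint_N.
by vm_compute.
Qed.

Theorem mainTheorem5 :
  let Z := incidence_mx (@fle 6) (Phi pi6) in
  ((phi sigma9)%:Z = \sum_i \sum_j (Z *m Z *m Z) i j) /\
  (phi sigma9 = 22062570%N).
Proof.
move=> Z; split; last exact: phi_val.
by rewrite int_part phi9_card -N6_card.
Qed.
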